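(* Let $n\ge 3$ and $\Delta,\Delta'\in\mathcal{P}_n$. If there exists $i\in\mathbb{Z}_n$ with $lab_\Delta((i,i-1))\neq lab_{\Delta'}((i,i-1))$, then $f^{(\Delta)}_{8,n}\neq f^{(\Delta')}_{8,n}$.
   Context: Cells are indexed by $\mathbb{Z}_n=\{0,\dots,n-1\}$, indices modulo $n$. Rule $8$ has local rule $r_8(x_1,x_2,x_3)=\neg x_1\wedge x_2\wedge x_3$ and global function $f_{8,n}(x)_i=r_8(x_{i-1},x_i,x_{i+1})$. An update schedule is an ordered partition $\Delta=(\Delta_1,\dots,\Delta_k)$ of $\mathbb{Z}_n$ into nonempty blocks; $\mathcal{P}_n$ is the set of them. For a block $B$ let $f^{(B)}(x)_i=f_{8,n}(x)_i$ if $i\in B$ and $x_i$ otherwise; $f^{(\Delta)}_{8,n}=f^{(\Delta_k)}\circ\cdots\circ f^{(\Delta_1)}$. (The paper states the conclusion as inequality of the transition digraphs with arcs $(x,f^{(\Delta)}_{8,n}(x))$, equivalent to inequality of the maps.) For $u,v\in\mathbb{Z}_n$ with $u\in\Delta_a$, $v\in\Delta_b$, $lab_\Delta((u,v))=\oplus$ if $b\le a$ and $\ominus$ if $a<b$. *)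

(* Defs.v *)
From mathcomp Require Import all_boot all_order.
Set Implicit Arguments. Unset Strict Implicit. Unset Printing Implicit Defensive.

Definition config (n : nat) := {ffun 'I_n -> bool}.

Definition r8 (x1 x2 x3 : bool) : bool := ~~ x1 && x2 && x3.

Definition f8 n (x : config n) (i : 'I_n) : bool :=
  r8 (x (ord_pred i)) (x i) (x (ordS i)).

(* Update schedules: ordered partitions (Delta_1, ..., Delta_k) of 'I_n into
   nonempty blocks, represented as a sequence of sets. *)
Definition is_schedule n (D : seq {set 'I_n}) : Prop :=
  [/\ all (fun B : {set 'I_n} => B != set0) D,
      (forall a b, a < size D -> b < size D -> a != b ->
         [disjoint nth set0 D a & nth set0 D b]) &
      (forall i : 'I_n, has (fun B : {set 'I_n} => i \in B) D)].

Definition fblock n (B : {set 'I_n}) (x : config n) : config n :=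
  [ffun i => if i \in B then f8 x i else x i].

Definition fsched n (D : seq {set 'I_n}) (x : config n) : config n :=
  foldl (fun y B => fblock B y) x D.

Definition blk n (D : seq {set 'I_n}) (u : 'I_n) : nat :=
  find (fun B : {set 'I_n} => u \in B) D.

(* label of the arc (u,v): true = (+) iff b <= a, false = (-) iff a < b *)
Definition lab n (D : seq {set 'I_n}) (u v : 'I_n) : bool :=
  blk D v <= blk D u.

(* Main.v *)
Require Import Defs.
From mathcomp Require Import all_boot all_order.
From mathcomp Require Import zify.

Lemma fsched_cons n (B : {set 'I_n}) S x : fsched (B :: S) x = fsched S (fblock B x).
Proof. by []. Qed.

Lemma fsched_cat n (S1 S2 : seq {set 'I_n}) x : fsched (S1 ++ S2) x = fsched S2 (fsched S1 x).
Proof. by rewrite /fsched foldl_cat. Qed.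

Lemma fsched_notin n (S : seq {set 'I_n}) x j :
  (forall B, B \in S -> j \notin B) -> fsched S x j = x j.
Proof.
elim: S x => [|B S IH] x H //.
rewrite fsched_cons IH; last by move=> B' HB'; apply: H; rewrite inE HB' orbT.
by rewrite ffunE (negbTE (H B (mem_head _ _))).
Qed.

Lemma fsched_le n (S : seq {set 'I_n}) x j : fsched S x j -> x j.
Proof.
elim: S x => [|B S IH] x //. rewrite fsched_cons => /IH.
rewrite ffunE; case: ifP => // _.
by rewrite /f8 /r8 => /andP [/andP [_ ->]].
Qed.

Lemma notin_take n (S : seq {set 'I_n}) j k :
  k <= blk S j -> forall B, B \in take k S -> j \notin B.
Proof.
move=> hk B /(nthP set0) [t ht <-].
rewrite size_take_min in ht.
have htk : t < k by lia.
rewrite nth_take //; apply/negbT/(before_find set0 (a := fun B : {set 'I_n} => j \in B)).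
exact: leq_trans htk hk.
Qed.

Lemma keyG n (S : seq {set 'I_n}) x j k :
  (forall a b, a < size S -> b < size S -> a != b ->
         [disjoint nth set0 S a & nth set0 S b]) ->
  has (fun B : {set 'I_n} => j \in B) S -> blk S j < k -> k <= size S ->
  fsched (take k S) x j = f8 (fsched (take (blk S j) S) x) j.
Proof.
move=> Hd Hh hbk hk.
set b := blk S j in hbk *.
have Hb : b < size S by rewrite /b /blk -has_find.
have Hjb : j \in nth set0 S b by exact: (nth_find set0 Hh).
have E : take k S = take b S ++ nth set0 S b :: drop b.+1 (take k S).
  rewrite -{1}(cat_take_drop b (take k S)) take_takel; last exact: ltnW.
  congr (_ ++ _). rewrite (drop_nth set0) ?nth_take // size_take_min; lia.
rewrite E fsched_cat fsched_cons fsched_notin.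
  by rewrite ffunE Hjb.
move=> B /(nthP set0) [t ht <-].
rewrite size_drop size_take_min in ht.
rewrite nth_drop nth_take; last by lia.
apply/negP => Hj.
have := Hd b (b.+1 + t) Hb ltac:(lia) ltac:(lia).
by move/disjointFr => /(_ _ Hjb); rewrite Hj.
Qed.

Lemma val_pred n (j : 'I_n) : val (ord_pred j) = if val j == 0 then n.-1 else (val j).-1.
Proof.
case: j => j hj /=.
case: eqP => [->|h].
  rewrite add0n modn_small //; lia.
have -> : (j + n).-1 = j.-1 + n by lia.
rewrite modnDr modn_small //; lia.
Qed.

Lemma core n (D D' : seq {set 'I_n}) (i : 'I_n) :
  3 <= n -> is_schedule D -> is_schedule D' ->
  lab D i (ord_pred i) -> ~~ lab D' i (ord_pred i) ->
  let a := ord_pred i in let c := ord_pred a in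
  let x : config n := [ffun m => m != c] in
  fsched D x a /\ ~~ fsched D' x a.
Proof.
move=> hn [_ Hd Hh] [_ Hd' Hh'] hl hl' a c x.
have hca : c != a.
  apply/eqP => /(congr1 val); rewrite /c val_pred.
  case: (a) => v hv /=; case: eqP => //; lia.
have hci : c != i.
  have hi := ltn_ord i.
  apply/eqP => /(congr1 val); rewrite /c /a !val_pred.
  case: (val i =P 0) => [->|h] /=; case: eqP => /=; lia.
have Sa : ordS a = i by rewrite /a ord_predK.
have xa : x a by rewrite ffunE eq_sym.
have xi : x i by rewrite ffunE eq_sym.
have xc : x c = false by rewrite ffunE eqxx.
have hs : forall j, blk D j < size D by move=> j; rewrite /blk -has_find.
have hs' : forall j, blk D' j < size D' by move=> j; rewrite /blk -has_find.
split.
  rewrite -(take_size D) (keyG _ _ x _ _ Hd (Hh a) (hs a) (leqnn _)).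
  rewrite /f8 Sa -/c.
  have -> : fsched (take (blk D a) D) x c = false.
    by apply/negbTE/negP => /fsched_le; rewrite xc.
  rewrite !fsched_notin; first by rewrite xa xi.
    by apply: notin_take; exact: hl.
  by apply: notin_take.
have hb' : blk D' i < blk D' a by rewrite /lab -ltnNge in hl'.
rewrite -(take_size D') (keyG _ _ x _ _ Hd' (Hh' a) (hs' a) (leqnn _)).
rewrite /f8 Sa.
rewrite (keyG _ _ x _ _ Hd' (Hh' i) hb' (ltnW (hs' a))).
rewrite /f8 -/a [fsched (take (blk D' i) D') x a]fsched_notin; last by apply: notin_take; exact: ltnW.
by rewrite xa /r8 /= !andbF.
Qed.

Theorem mainTheorem14 (n : nat) (D D' : seq {set 'I_n}) :
  3 <= n -> is_schedule D -> is_schedule D' ->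
  (exists i : 'I_n, lab D i (ord_pred i) != lab D' i (ord_pred i)) ->
  fsched D <> fsched D'.
Proof.
move=> hn hD hD' [i hi] E.
case hl: (lab D i (ord_pred i)) hi; case hl': (lab D' i (ord_pred i)) => // _.
  have [h1 h2] := core _ _ _ i hn hD hD' hl (negbT hl').
  by move: h2; rewrite -E h1.
have [h1 h2] := core _ _ _ i hn hD' hD hl' (negbT hl).
by move: h2; rewrite E h1.
Qed.
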